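(* For every complex number $q$ with $0<|q|<1$, \[ \sum_{k=1}^{\infty}(-1)^kq^{k^2}[4k+1]\frac{(q;q^2)_k^3}{(q^2;q^2)_k^3}\sum_{i=1}^{2k}(-1)^i\frac{q^i}{[i]^2} =\frac{(q,q^3;q^2)_{\infty}}{(q^2;q^2)_{\infty}^2}\sum_{j=1}^{\infty}\frac{q^{2j}}{[2j]^2}. \]
   Context: For complex $x,q$ with $|q|<1$: $(x;q)_\infty=\prod_{i\ge 0}(1-xq^i)$ and, for an integer $n\ge 0$, $(x;q)_n=\prod_{i=0}^{n-1}(1-xq^i)$ (equivalently $(x;q)_\infty/(xq^n;q)_\infty$). Multiple arguments mean products: $(x_1,\dots,x_r;q)_m=(x_1;q)_m\cdots(x_r;q)_m$ for $m$ a nonnegative integer or $\infty$. The $q$-integer is $[n]=1+q+\cdots+q^{n-1}=(1-q^n)/(1-q)$. *)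

(* Defs.v *)
From Stdlib Require Import Reals.
From Coquelicot Require Import Coquelicot.
Open Scope C_scope.

Fixpoint qpoch (x q : C) (n : nat) : C :=
  match n with
  | O => 1
  | S m => qpoch x q m * (1 - x * q ^ m)
  end.

Definition is_qpoch_inf (x q l : C) : Prop :=
  filterlim (fun n => qpoch x q n) eventually (locally l).

Definition qint (q : C) (n : nat) : C := (1 - q ^ n) / (1 - q).

Definition inner_sum (q : C) (k : nat) : C :=
  @sum_n C_AbelianMonoid (fun i => match i with O => RtoC 0 | S _ => (-1) ^ i * q ^ i / (qint q i ^ 2) end) (2 * k).

Definition lhs_term (q : C) (k : nat) : C :=
  match k with O => RtoC 0 | S _ =>
  (-1) ^ k * q ^ (k * k) * qint q (4 * k + 1)
    * (qpoch q (q ^ 2) k ^ 3 / qpoch (q ^ 2) (q ^ 2) k ^ 3)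
    * inner_sum q k end.

Definition rhs_term (q : C) (j : nat) : C :=
  match j with O => RtoC 0 | S _ => q ^ (2 * j) / (qint q (2 * j) ^ 2) end.

(* Main.v *)
Require Import Defs.
From Stdlib Require Import Reals Lia Lra Arith.
From Coquelicot Require Import Coquelicot.
Open Scope C_scope.


Fixpoint pif (q : C) (n k : nat) : C :=
  match k with O => 1 | S k' => pif q n k' * (q ^ (2 * n) - q ^ (2 * k')) end.
Definition ak q k := qint q (4 * k + 1) * (qpoch q (q ^ 2) k ^ 3 / qpoch (q ^ 2) (q ^ 2) k ^ 3) * q ^ k.
Definition dd q n k := qpoch (q ^ (2 * n + 3)) (q ^ 2) k.
Definition PP q n := qpoch q (q ^ 2) n * qpoch (q ^ 3) (q ^ 2) n / qpoch (q ^ 2) (q ^ 2) n ^ 2.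
Definition FF q n k := ak q k * pif q n k / (dd q n k * PP q n).
Definition gg q n := @sum_n C_AbelianMonoid (rhs_term q) n.
Definition Gam q n k := match k with O => RtoC 0 | S k' =>
  - (/ q ^ 2) * ak q k * pif q n k' / (dd q n k * PP q n)
  * (q ^ (2 * n + 2) * (q ^ (2 * k) - 1) / ((1 - q ^ (2 * n + 2) / q) * (1 - q * q ^ (2 * k) * q ^ (2 * k))))
  * ((inner_sum q k - gg q n) * (q ^ (2 * k) - 1) ^ 2 - (1 - q) ^ 2 * q ^ (2 * k)) end.
Definition Gam0 q n k := match k with O => RtoC 0 | S k' =>
  - (/ q ^ 2) * ak q k * pif q n k' / (dd q n k * PP q n)
  * (q ^ (2 * n + 2) * (q ^ (2 * k) - 1) / ((1 - q ^ (2 * n + 2) / q) * (1 - q * q ^ (2 * k) * q ^ (2 * k))))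
  * ((q ^ (2 * k) - 1) ^ 2) end.

Lemma pif_S_n q n k : pif q (S n) (S k) = q ^ (2 * k) * (q ^ (2 * n + 2) - 1) * pif q n k.
Proof.
  induction k.
  - cbn [pif]. replace (2 * S n)%nat with (2 * n + 2)%nat by lia.
    replace (2 * 0)%nat with 0%nat by lia. change (q ^ 0) with (RtoC 1). ring.
  - change (pif q (S n) (S (S k))) with (pif q (S n) (S k) * (q ^ (2 * S n) - q ^ (2 * S k))).
    rewrite IHk. cbn [pif].
    replace (2 * S k)%nat with (2 * k + 2)%nat by lia.
    replace (2 * S n)%nat with (2 * n + 2)%nat by lia.
    rewrite !Cpow_add_r. ring.
Qed.

Lemma qpoch_S_l x b k : qpoch x b (S k) = (1 - x) * qpoch (x * b) b k.
Proof.
  induction k.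
  - simpl. ring.
  - change (qpoch x b (S (S k))) with (qpoch x b (S k) * (1 - x * b ^ (S k))).
    rewrite IHk. simpl. ring.
Qed.

Lemma nz1 (x : C) : (Cmod x < 1)%R -> 1 - x <> 0.
Proof.
  intros H E. assert (x = 1) by (replace x with (1 - (1 - x)) by ring; rewrite E; ring).
  subst. rewrite Cmod_1 in H. lra.
Qed.

Lemma nzq (q : C) (m : nat) : (0 < Cmod q)%R -> (Cmod q < 1)%R -> (0 < m)%nat -> 1 - q ^ m <> 0.
Proof.
  intros h0 h1 hm. apply nz1. rewrite Cmod_pow. apply pow_lt_1_compat; [lra|assumption].
Qed.

Lemma q_nz (q : C) : (0 < Cmod q)%R -> q <> 0.
Proof. intros h E. subst. rewrite Cmod_0 in h. lra. Qed.

Lemma Cinv_nz (x : C) : x <> 0 -> / x <> 0.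
Proof. intros h E. apply h. replace x with (x * (x * / x)) by (field; assumption). rewrite E. ring. Qed.

Lemma Cdiv_nz (x y : C) : x <> 0 -> y <> 0 -> x / y <> 0.
Proof. intros. unfold Cdiv. apply Cmult_neq_0; auto. apply Cinv_nz; auto. Qed.

Lemma Cpow_nz' (x : C) n : x <> 0 -> x ^ n <> 0.
Proof. apply Cpow_nz. Qed.

Lemma pow01 (x : R) n : (0 <= x <= 1)%R -> (0 <= x ^ n <= 1)%R.
Proof. intros h. induction n; simpl; nra. Qed.

Lemma qpoch_nz (x b : C) k : (Cmod x < 1)%R -> (Cmod b <= 1)%R -> qpoch x b k <> 0.
Proof.
  intros hx hb. induction k; simpl.
  - intro E. injection E. lra.
  - apply Cmult_neq_0; auto. apply nz1. rewrite Cmod_mult, Cmod_pow.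
    assert (0 <= Cmod b ^ k <= 1)%R by (apply pow01; split; [apply Cmod_ge_0|assumption]).
    pose proof (Cmod_ge_0 x). nra.
Qed.
Lemma key_S' (q Q Kp A Y D P H G A2 H2 G' P' D' D2 Y' Ys N K1 K2 : C) :
  q <> 0 -> 1 - q <> 0 -> D <> 0 -> P <> 0 ->
  1 - q * Q <> 0 -> 1 - q^3 * Q <> 0 -> 1 - q^2 * Q <> 0 ->
  1 - q^5 * Q * Kp <> 0 -> 1 - q^5 * Kp^2 <> 0 -> 1 - q^4 * Kp <> 0 ->
  1 - q^3 * Kp <> 0 -> 1 - q^9*Kp^2 <> 0 ->
  1 - q * (q ^ 2 * Kp) * (q ^ 2 * Kp) <> 0 -> 1 - q * (q ^ 4 * Kp) * (q ^ 4 * Kp) <> 0 ->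
  K1 = q^2 * Kp -> K2 = q^4 * Kp -> N = q^2 * Q ->
  A2 = A * ((1 - q^9 * Kp^2) / (1 - q^5 * Kp^2) * ((1 - q^3 * Kp)/(1 - q^4 * Kp))^3 * q) ->
  H2 = H + (- (q^3 * Kp) / ((1 - q^3 * Kp)/(1-q))^2) + q^4 * Kp / ((1 - q^4*Kp)/(1-q))^2 ->
  G' = G + q^2 * Q / ((1 - q^2 * Q)/(1-q))^2 ->
  P' = P * ((1 - q * Q) * (1 - q^3 * Q) / (1 - q^2 * Q)^2) ->
  D' = D * (1 - q^5 * Q * Kp) / (1 - q^3 * Q) ->
  D2 = D * (1 - q^5 * Q * Kp) ->
  Y' = Kp * (q^2 * Q - 1) * Y -> Ys = Y * (Q - Kp) ->
  A * Y' / (D' * P') * (H - G') - A * Ys / (D * P) * (H - G)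
  = (- (/ q ^ 2) * A2 * Ys / (D2 * P) * (N * (K2 - 1) / ((1 - N / q) * (1 - q * K2 * K2)))
      * ((H2 - G) * (K2 - 1) ^ 2 - (1 - q) ^ 2 * K2))
   - (- (/ q ^ 2) * A * Y / (D * P) * (N * (K1 - 1) / ((1 - N / q) * (1 - q * K1 * K1)))
      * ((H - G) * (K1 - 1) ^ 2 - (1 - q) ^ 2 * K1)).
Proof.
  intros h1 h2 h3 h4 h5 h6 h7 h8 h9 h10 h11 h12 h13 h14 e1 e2 e3 e4 e5 e6 e7 e8 e9 e10 e11.
  subst. field. repeat split; assumption.
Qed.

Lemma key0_S' (q Q Kp A Y D P A2 P' D' D2 Y' Ys N K1 K2 : C) :
  q <> 0 -> 1 - q <> 0 -> D <> 0 -> P <> 0 ->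
  1 - q * Q <> 0 -> 1 - q^3 * Q <> 0 -> 1 - q^2 * Q <> 0 ->
  1 - q^5 * Q * Kp <> 0 -> 1 - q^5 * Kp^2 <> 0 -> 1 - q^4 * Kp <> 0 ->
  1 - q^3 * Kp <> 0 -> 1 - q^9*Kp^2 <> 0 ->
  1 - q * (q ^ 2 * Kp) * (q ^ 2 * Kp) <> 0 -> 1 - q * (q ^ 4 * Kp) * (q ^ 4 * Kp) <> 0 ->
  K1 = q^2 * Kp -> K2 = q^4 * Kp -> N = q^2 * Q ->
  A2 = A * ((1 - q^9 * Kp^2) / (1 - q^5 * Kp^2) * ((1 - q^3 * Kp)/(1 - q^4 * Kp))^3 * q) ->
  P' = P * ((1 - q * Q) * (1 - q^3 * Q) / (1 - q^2 * Q)^2) ->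
  D' = D * (1 - q^5 * Q * Kp) / (1 - q^3 * Q) ->
  D2 = D * (1 - q^5 * Q * Kp) ->
  Y' = Kp * (q^2 * Q - 1) * Y -> Ys = Y * (Q - Kp) ->
  A * Y' / (D' * P') - A * Ys / (D * P)
  = (- (/ q ^ 2) * A2 * Ys / (D2 * P) * (N * (K2 - 1) / ((1 - N / q) * (1 - q * K2 * K2)))
      * ((K2 - 1) ^ 2))
   - (- (/ q ^ 2) * A * Y / (D * P) * (N * (K1 - 1) / ((1 - N / q) * (1 - q * K1 * K1)))
      * ((K1 - 1) ^ 2)).
Proof.
  intros h1 h2 h3 h4 h5 h6 h7 h8 h9 h10 h11 h12 h13 h14 e1 e2 e3 e4 e7 e8 e9 e10 e11.
  subst. field. repeat split; assumption.
Qed.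

Lemma key_0' (q Q P G A0 A1 Y0 Y0' D0 D0' D1 P' H0 H1 G' N K1 : C) :
  q <> 0 -> 1 - q <> 0 -> P <> 0 ->
  1 - q * Q <> 0 -> 1 - q^3 * Q <> 0 -> 1 - q^2 * Q <> 0 ->
  1 - q^2 <> 0 -> 1 - q^5 <> 0 -> 1 - q * q^2 * q^2 <> 0 ->
  K1 = q^2 -> N = q^2 * Q -> A0 = 1 -> Y0 = 1 -> Y0' = 1 -> D0 = 1 -> D0' = 1 -> H0 = 0 ->
  A1 = (1 - q^5)/(1-q) * ((1 - q)/(1 - q^2))^3 * q ->
  H1 = (- q / ((1 - q)/(1-q))^2) + q^2 / ((1 - q^2)/(1-q))^2 ->
  G' = G + q^2 * Q / ((1 - q^2 * Q)/(1-q))^2 ->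
  P' = P * ((1 - q * Q) * (1 - q^3 * Q) / (1 - q^2 * Q)^2) ->
  D1 = 1 - q^3 * Q ->
  A0 * Y0' / (D0' * P') * (H0 - G') - A0 * Y0 / (D0 * P) * (H0 - G)
  = (- (/ q ^ 2) * A1 * Y0 / (D1 * P) * (N * (K1 - 1) / ((1 - N / q) * (1 - q * K1 * K1)))
      * ((H1 - G) * (K1 - 1) ^ 2 - (1 - q) ^ 2 * K1)) - 0.
Proof.
  intros h1 h2 h3 h4 h5 h6 h7 h8 h9 e1 e2 e3 e4 e5 e6 e7 e8 e9 e10 e11 e12 e13.
  subst. field. repeat split; assumption.
Qed.

Lemma key0_0' (q Q P A0 A1 Y0 Y0' D0 D0' D1 P' N K1 : C) :
  q <> 0 -> 1 - q <> 0 -> P <> 0 ->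
  1 - q * Q <> 0 -> 1 - q^3 * Q <> 0 -> 1 - q^2 * Q <> 0 ->
  1 - q^2 <> 0 -> 1 - q^5 <> 0 -> 1 - q * q^2 * q^2 <> 0 ->
  K1 = q^2 -> N = q^2 * Q -> A0 = 1 -> Y0 = 1 -> Y0' = 1 -> D0 = 1 -> D0' = 1 ->
  A1 = (1 - q^5)/(1-q) * ((1 - q)/(1 - q^2))^3 * q ->
  P' = P * ((1 - q * Q) * (1 - q^3 * Q) / (1 - q^2 * Q)^2) ->
  D1 = 1 - q^3 * Q ->
  A0 * Y0' / (D0' * P') - A0 * Y0 / (D0 * P)
  = (- (/ q ^ 2) * A1 * Y0 / (D1 * P) * (N * (K1 - 1) / ((1 - N / q) * (1 - q * K1 * K1)))
      * ((K1 - 1) ^ 2)) - 0.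
Proof.
  intros h1 h2 h3 h4 h5 h6 h7 h8 h9 e1 e2 e3 e4 e5 e6 e7 e8 e9 e10.
  subst. field. repeat split; assumption.
Qed.

Lemma pow2S (q : C) k : q ^ (2 * S k) = q ^ 2 * q ^ (2 * k).
Proof. replace (2 * S k)%nat with (2 + 2 * k)%nat by lia. apply Cpow_add_r. Qed.

Lemma powq2 (q : C) k : (q ^ 2) ^ k = q ^ (2 * k).
Proof. rewrite Cpow_mult_r. reflexivity. Qed.

Ltac nzp q e := match goal with |- Cminus _ ?X <> _ =>
  replace X with (q ^ e) by (rewrite ?Cpow_add_r; ring); apply nzq; [assumption|assumption|lia] end.

Lemma minus1_pow_even k : (-1 : C) ^ (2 * k) = 1.
Proof. rewrite Cpow_mult_r. replace ((-1 : C) ^ 2) with (RtoC 1) by ring. apply Cpow_1_l. Qed.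

Lemma inner_sum_S (q : C) k : (0 < Cmod q)%R -> (Cmod q < 1)%R ->
  inner_sum q (S k) = inner_sum q k + (- (q * q ^ (2 * k)) / ((1 - q * q ^ (2 * k)) / (1 - q)) ^ 2)
    + q ^ 2 * q ^ (2 * k) / ((1 - q ^ 2 * q ^ (2 * k)) / (1 - q)) ^ 2.
Proof.
  intros h0 h1. unfold inner_sum.
  replace (2 * S k)%nat with (S (S (2 * k))) by lia.
  rewrite !sum_Sn. change plus with Cplus. cbv beta.
  unfold qint.
  replace (S (S (2 * k))) with (2 + 2 * k)%nat by lia.
  replace (S (2 * k)) with (1 + 2 * k)%nat by lia.
  rewrite !Cpow_add_r, minus1_pow_even.
  assert (1 - q <> 0) by (nzp q 1%nat).
  assert (1 - q ^ 1 * q ^ (2 * k) <> 0) by (nzp q (1 + 2 * k)%nat).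
  assert (1 - q ^ 2 * q ^ (2 * k) <> 0) by (nzp q (2 + 2 * k)%nat).
  rewrite Cpow_1_r in *.
  field. repeat split; auto.
Qed.

Lemma qpoch_S x b n : qpoch x b (S n) = qpoch x b n * (1 - x * b ^ n).
Proof. reflexivity. Qed.

Lemma gg_S (q : C) n : gg q (S n) = gg q n + q ^ 2 * q ^ (2 * n) / ((1 - q ^ 2 * q ^ (2 * n)) / (1 - q)) ^ 2.
Proof. unfold gg. rewrite sum_Sn. change plus with Cplus. cbv beta. unfold rhs_term, qint. rewrite pow2S. reflexivity. Qed.

Lemma PP_nz (q : C) n : (0 < Cmod q)%R -> (Cmod q < 1)%R -> PP q n <> 0.
Proof.
  intros h0 h1. assert (Cmod (q^2) < 1)%R by (rewrite Cmod_pow; apply pow_lt_1_compat; [lra|lia]).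
  assert (Cmod (q^3) < 1)%R by (rewrite Cmod_pow; apply pow_lt_1_compat; [lra|lia]).
  unfold PP. apply Cdiv_nz. apply Cmult_neq_0; apply qpoch_nz; lra.
  apply Cpow_nz, qpoch_nz; lra.
Qed.

Lemma PP_S (q : C) n : (0 < Cmod q)%R -> (Cmod q < 1)%R ->
  PP q (S n) = PP q n * ((1 - q * q ^ (2 * n)) * (1 - q ^ 3 * q ^ (2 * n)) / (1 - q ^ 2 * q ^ (2 * n)) ^ 2).
Proof.
  intros h0 h1. assert (Cmod (q^2) < 1)%R by (rewrite Cmod_pow; apply pow_lt_1_compat; [lra|lia]).
  assert (Cmod (q^3) < 1)%R by (rewrite Cmod_pow; apply pow_lt_1_compat; [lra|lia]).
  assert (qpoch (q^2) (q^2) n <> 0) by (apply qpoch_nz; lra).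
  assert (1 - q ^ 2 * q ^ (2 * n) <> 0) by (nzp q (2 + 2 * n)%nat).
  unfold PP. rewrite !qpoch_S, !powq2. field. auto.
Qed.

Lemma dd_nz (q : C) n k : (0 < Cmod q)%R -> (Cmod q < 1)%R -> dd q n k <> 0.
Proof.
  intros h0 h1. unfold dd. apply qpoch_nz.
  rewrite Cmod_pow; apply pow_lt_1_compat; [lra|lia].
  rewrite Cmod_pow. apply pow01. pose proof (Cmod_ge_0 q). lra.
Qed.

Lemma dd_SS (q : C) n k : dd q n (S (S k)) = dd q n (S k) * (1 - q ^ 5 * q ^ (2 * n) * q ^ (2 * k)).
Proof.
  unfold dd. change (qpoch (q ^ (2 * n + 3)) (q ^ 2) (S (S k))) with
    (qpoch (q ^ (2 * n + 3)) (q ^ 2) (S k) * (1 - q ^ (2 * n + 3) * (q ^ 2) ^ (S k))).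
  f_equal. rewrite powq2. replace (2 * S k)%nat with (2 + 2 * k)%nat by lia.
  rewrite !Cpow_add_r. ring.
Qed.

Lemma dd_Sn (q : C) n k : (0 < Cmod q)%R -> (Cmod q < 1)%R ->
  dd q (S n) (S k) = dd q n (S k) * (1 - q ^ 5 * q ^ (2 * n) * q ^ (2 * k)) / (1 - q ^ 3 * q ^ (2 * n)).
Proof.
  intros h0 h1. rewrite <- dd_SS. unfold dd. rewrite (qpoch_S_l _ _ (S k)).
  assert (1 - q ^ 3 * q ^ (2 * n) <> 0) by (nzp q (3 + 2 * n)%nat).
  replace (q ^ (2 * n + 3) * q ^ 2) with (q ^ (2 * S n + 3)).
  2:{ replace (2 * S n + 3)%nat with (2 * n + 3 + 2)%nat by lia. apply Cpow_add_r. }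
  replace (q ^ (2 * n + 3)) with (q ^ 3 * q ^ (2 * n)) by (rewrite <- Cpow_add_r; f_equal; lia).
  field. auto.
Qed.

Lemma dd_1 (q : C) n : dd q n 1 = 1 - q ^ 3 * q ^ (2 * n).
Proof. unfold dd. rewrite qpoch_S. change (qpoch ?x ?b 0) with (RtoC 1). change ((q^2)^0) with (RtoC 1). replace (q ^ (2 * n + 3)) with (q ^ 3 * q ^ (2 * n)) by (rewrite <- Cpow_add_r; f_equal; lia). ring. Qed.

Lemma ak_SS (q : C) k : (0 < Cmod q)%R -> (Cmod q < 1)%R ->
  ak q (S (S k)) = ak q (S k) * ((1 - q ^ 9 * (q ^ (2 * k)) ^ 2) / (1 - q ^ 5 * (q ^ (2 * k)) ^ 2)
     * ((1 - q ^ 3 * q ^ (2 * k)) / (1 - q ^ 4 * q ^ (2 * k))) ^ 3 * q).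
Proof.
  intros h0 h1. unfold ak, qint.
  change (qpoch ?x ?b (S (S k))) with (qpoch x b (S k) * (1 - x * b ^ (S k))).
  rewrite !powq2.
  assert (Cmod (q^2) < 1)%R by (rewrite Cmod_pow; apply pow_lt_1_compat; [lra|lia]).
  assert (qpoch (q^2) (q^2) (S k) <> 0) by (apply qpoch_nz; lra).
  assert (1 - q <> 0) by (nzp q 1%nat).
  assert (1 - q ^ 5 * (q ^ (2 * k)) ^ 2 <> 0) by (nzp q (5 + 2 * k + 2 * k)%nat).
  assert (1 - q ^ 4 * q ^ (2 * k) <> 0) by (nzp q (4 + 2 * k)%nat).
  replace (q ^ (4 * S (S k) + 1)) with (q ^ 9 * (q ^ (2 * k)) ^ 2)
    by (rewrite <- Cpow_mult_r, <- Cpow_add_r; f_equal; lia).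
  replace (q ^ (4 * S k + 1)) with (q ^ 5 * (q ^ (2 * k)) ^ 2)
    by (rewrite <- Cpow_mult_r, <- Cpow_add_r; f_equal; lia).
  replace (q ^ (2 * S k)) with (q ^ 2 * q ^ (2 * k)) by (symmetry; apply pow2S).
  replace (q ^ 2 * (q ^ 2 * q ^ (2 * k))) with (q ^ 4 * q ^ (2 * k)) by ring.
  replace (q * (q ^ 2 * q ^ (2 * k))) with (q ^ 3 * q ^ (2 * k)) by ring.
  rewrite (Cpow_S q (S k)).
  field. repeat split; auto.
Qed.

Lemma ak_0 (q : C) : (0 < Cmod q)%R -> (Cmod q < 1)%R -> ak q 0 = 1.
Proof.
  intros h0 h1. unfold ak, qint. assert (1 - q <> 0) by (nzp q 1%nat).
  change (qpoch ?x ?b 0) with (RtoC 1). rewrite Cpow_1_r. simpl. field. auto.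
Qed.

Lemma ak_1 (q : C) : (0 < Cmod q)%R -> (Cmod q < 1)%R ->
  ak q 1 = (1 - q^5)/(1-q) * ((1 - q)/(1 - q^2))^3 * q.
Proof.
  intros h0 h1. unfold ak, qint. assert (1 - q <> 0) by (nzp q 1%nat).
  assert (1 - q^2 <> 0) by (nzp q 2%nat).
  rewrite !qpoch_S. change (qpoch ?x ?b 0) with (RtoC 1).
  replace (4 * 1 + 1)%nat with 5%nat by lia. simpl (_ ^ 0). field. auto.
Qed.

Lemma inner_sum_0 (q : C) : inner_sum q 0 = 0.
Proof. unfold inner_sum. simpl (2 * 0)%nat. rewrite sum_O. reflexivity. Qed.

Lemma inner_sum_1 (q : C) : (0 < Cmod q)%R -> (Cmod q < 1)%R ->
  inner_sum q 1 = (- q / ((1 - q)/(1-q))^2) + q^2 / ((1 - q^2)/(1-q))^2.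
Proof.
  intros h0 h1. rewrite inner_sum_S, inner_sum_0 by auto. simpl (2 * 0)%nat.
  change (q ^ 0) with (RtoC 1). rewrite !Cmult_1_r. ring.
Qed.

Lemma step (q : C) n k : (0 < Cmod q)%R -> (Cmod q < 1)%R ->
  FF q (S n) k * (inner_sum q k - gg q (S n)) - FF q n k * (inner_sum q k - gg q n)
  = Gam q n (S k) - Gam q n k.
Proof.
  intros h0 h1. assert (hq : q <> 0) by (apply q_nz; auto).
  assert (1 - q <> 0) by (nzp q 1%nat).
  destruct k as [|k].
  - unfold FF, Gam. eapply key_0' with (Q := q ^ (2 * n)); auto.
    all: try (nzp q (1 + 2 * n)%nat); try (nzp q (3 + 2 * n)%nat); try (nzp q (2 + 2 * n)%nat).
    all: try (nzp q 2%nat); try (nzp q 5%nat).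
    + apply PP_nz; auto.
    + rewrite Cpow_add_r. ring.
    + apply ak_0; auto.
    + apply inner_sum_0.
    + apply ak_1; auto.
    + apply inner_sum_1; auto.
    + apply gg_S.
    + apply PP_S; auto.
    + apply dd_1.
  - unfold FF, Gam. eapply key_S' with (Q := q ^ (2 * n)) (Kp := q ^ (2 * k)); auto.
    + apply dd_nz; auto.
    + apply PP_nz; auto.
    + nzp q (1 + 2 * n)%nat.
    + nzp q (3 + 2 * n)%nat.
    + nzp q (2 + 2 * n)%nat.
    + nzp q (5 + 2 * n + 2 * k)%nat.
    + nzp q (5 + 2 * k + 2 * k)%nat.
    + nzp q (4 + 2 * k)%nat.
    + nzp q (3 + 2 * k)%nat.
    + nzp q (9 + 2 * k + 2 * k)%nat.
    + nzp q (5 + 2 * k + 2 * k)%nat.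
    + nzp q (9 + 2 * k + 2 * k)%nat.
    + apply pow2S.
    + rewrite !pow2S. ring.
    + rewrite Cpow_add_r. ring.
    + apply ak_SS; auto.
    + rewrite inner_sum_S by auto. rewrite pow2S.
      replace (q * (q ^ 2 * q ^ (2 * k))) with (q ^ 3 * q ^ (2 * k)) by ring.
      replace (q ^ 2 * (q ^ 2 * q ^ (2 * k))) with (q ^ 4 * q ^ (2 * k)) by ring.
      reflexivity.
    + apply gg_S.
    + apply PP_S; auto.
    + apply dd_Sn; auto.
    + apply dd_SS.
    + rewrite pif_S_n, Cpow_add_r. ring.
Qed.


Lemma step0 (q : C) n k : (0 < Cmod q)%R -> (Cmod q < 1)%R ->
  FF q (S n) k - FF q n k = Gam0 q n (S k) - Gam0 q n k.
Proof.
  intros h0 h1. assert (hq : q <> 0) by (apply q_nz; auto).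
  assert (1 - q <> 0) by (nzp q 1%nat).
  destruct k as [|k].
  - unfold FF, Gam0. eapply key0_0' with (Q := q ^ (2 * n)); auto.
    all: try (nzp q (1 + 2 * n)%nat); try (nzp q (3 + 2 * n)%nat); try (nzp q (2 + 2 * n)%nat).
    all: try (nzp q 2%nat); try (nzp q 5%nat).
    + apply PP_nz; auto.
    + rewrite Cpow_add_r. ring.
    + apply ak_0; auto.
    + apply ak_1; auto.
    + apply PP_S; auto.
    + apply dd_1.
  - unfold FF, Gam0. eapply key0_S' with (Q := q ^ (2 * n)) (Kp := q ^ (2 * k)); auto.
    + apply dd_nz; auto.
    + apply PP_nz; auto.
    + nzp q (1 + 2 * n)%nat.
    + nzp q (3 + 2 * n)%nat.
    + nzp q (2 + 2 * n)%nat.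
    + nzp q (5 + 2 * n + 2 * k)%nat.
    + nzp q (5 + 2 * k + 2 * k)%nat.
    + nzp q (4 + 2 * k)%nat.
    + nzp q (3 + 2 * k)%nat.
    + nzp q (9 + 2 * k + 2 * k)%nat.
    + nzp q (5 + 2 * k + 2 * k)%nat.
    + nzp q (9 + 2 * k + 2 * k)%nat.
    + apply pow2S.
    + rewrite !pow2S. ring.
    + rewrite Cpow_add_r. ring.
    + apply ak_SS; auto.
    + apply PP_S; auto.
    + apply dd_Sn; auto.
    + apply dd_SS.
    + rewrite pif_S_n, Cpow_add_r. ring.
Qed.

Lemma pif_zero (q : C) n k : (n < k)%nat -> pif q n k = 0.
Proof.
  intros h. induction k. lia.
  cbn [pif]. destruct (Nat.eq_dec n k).
  - subst. ring.
  - rewrite IHk by lia. ring.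
Qed.

Ltac toC := match goal with |- ?a = ?b => change (@eq C a b) end; change plus with Cplus; cbv beta.

Lemma telesc (f : nat -> C) m : @sum_n C_AbelianMonoid (fun k => f (S k) - f k) m = f (S m) - f O.
Proof.
  induction m. rewrite sum_O. reflexivity.
  rewrite sum_Sn, IHm. toC. ring.
Qed.

Lemma sum_sub (f g : nat -> C) m : @sum_n C_AbelianMonoid (fun k => f k - g k) m =
  @sum_n C_AbelianMonoid f m - @sum_n C_AbelianMonoid g m.
Proof.
  induction m. rewrite !sum_O. reflexivity.
  rewrite !sum_Sn, IHm. toC. ring.
Qed.

Lemma sum_add (f g : nat -> C) m : @sum_n C_AbelianMonoid (fun k => f k + g k) m =
  @sum_n C_AbelianMonoid f m + @sum_n C_AbelianMonoid g m.
Proof.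
  induction m. rewrite !sum_O. reflexivity.
  rewrite !sum_Sn, IHm. toC. ring.
Qed.

Lemma FF_sum (q : C) n : (0 < Cmod q)%R -> (Cmod q < 1)%R ->
  @sum_n C_AbelianMonoid (FF q n) n = RtoC 1 /\
  @sum_n C_AbelianMonoid (fun k => FF q n k * (inner_sum q k - gg q n)) n = RtoC 0.
Proof.
  intros h0 h1. induction n.
  - rewrite !sum_O. unfold FF. rewrite ak_0 by auto.
    cbn [pif]. unfold dd. change (qpoch ?x ?b 0) with (RtoC 1).
    unfold PP. change (qpoch ?x ?b 0) with (RtoC 1).
    rewrite inner_sum_0. unfold gg. rewrite sum_O. unfold rhs_term. split; toC; field.
  - destruct IHn as [I1 I2].
    assert (Z1 : FF q n (S n) = 0) by (unfold FF; rewrite pif_zero by lia; unfold Cdiv; ring).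
    assert (Z2 : forall k, pif q n (S k) = 0 -> Gam0 q n (S (S k)) = 0 /\ Gam q n (S (S k)) = 0).
    { intros k E. unfold Gam0, Gam. rewrite E. unfold Cdiv. split; ring. }
    destruct (Z2 n) as [Z3 Z4]. { apply pif_zero. lia. }
    split.
    + assert (E : forall k, FF q (S n) k = FF q n k + (Gam0 q n (S k) - Gam0 q n k)).
      { intro k. rewrite <- step0 by auto. ring. }
      rewrite (sum_n_ext _ _ _ E), sum_add, telesc, sum_Sn, I1, Z1, Z3. toC.
      unfold Gam0. ring.
    + assert (E : forall k, FF q (S n) k * (inner_sum q k - gg q (S n)) =
         FF q n k * (inner_sum q k - gg q n) + (Gam q n (S k) - Gam q n k)).
      { intro k. rewrite <- step by auto. ring. }
      rewrite (sum_n_ext _ _ _ E), sum_add, telesc, sum_Sn, I2, Z1, Z4. toC.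
      unfold Gam. ring.
Qed.


Lemma climE (u : nat -> C) (l : C) :
  filterlim u eventually (locally l) <->
  (forall eps : R, (0 < eps)%R -> exists N, forall n, (N <= n)%nat -> (Cmod (u n - l) < eps)%R).
Proof.
  split.
  - intros H eps heps.
    assert (hf := norm_factor_gt_0 (K := C_AbsRing) (V := C_NormedModule)).
    assert (he : (0 < eps / norm_factor)%R) by (apply Rdiv_lt_0_compat; [exact heps|exact hf]).
    destruct (proj1 (filterlim_locally u l) H (mkposreal _ he)) as [N HN].
    exists N. intros n hn. specialize (HN n hn).
    apply (norm_compat2 (K := C_AbsRing) (V := C_NormedModule)) in HN. simpl in HN.
    change (@norm C_AbsRing C_NormedModule (@minus C_NormedModule (u n) l)) with (Cmod (u n - l)) in HN.
    eapply Rlt_le_trans; [exact HN|]. right. field. lra.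
  - intros H. apply filterlim_locally. intros eps.
    destruct (H eps (cond_pos eps)) as [N HN]. exists N. intros n hn.
    apply (norm_compat1 (K := C_AbsRing) (V := C_NormedModule)). change (Cmod (u n - l) < eps)%R. apply HN; auto.
Qed.

Lemma clim_unique (u : nat -> C) (a b : C) :
  filterlim u eventually (locally a) -> filterlim u eventually (locally b) -> a = b.
Proof.
  intros Ha Hb. cut (a - b = 0). intro E. replace a with (a - b + b) by ring. rewrite E. ring. apply Cmod_eq_0.
  destruct (Rle_lt_dec (Cmod (a - b)) 0) as [h|h]. pose proof (Cmod_ge_0 (a - b)). lra.
  exfalso. set (e := (Cmod (a - b) / 3)%R).
  destruct (proj1 (climE u a) Ha e) as [N1 H1]. unfold e; lra.
  destruct (proj1 (climE u b) Hb e) as [N2 H2]. unfold e; lra.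
  specialize (H1 (N1 + N2)%nat ltac:(lia)). specialize (H2 (N1 + N2)%nat ltac:(lia)).
  set (m := (N1 + N2)%nat) in *.
  assert (Cmod (a - b) <= Cmod (u m - a) + Cmod (u m - b))%R.
  { replace (a - b) with ((-(u m - a)) + (u m - b)) by ring. eapply Rle_trans. apply Cmod_triangle. rewrite Cmod_opp. lra. }
  unfold e in *. lra.
Qed.

Lemma clim_plus (u v : nat -> C) (a b : C) :
  filterlim u eventually (locally a) -> filterlim v eventually (locally b) ->
  filterlim (fun n => u n + v n) eventually (locally (a + b)).
Proof.
  intros Ha Hb. apply climE. intros e he.
  destruct (proj1 (climE u a) Ha (e/2)%R) as [N1 H1]. lra.
  destruct (proj1 (climE v b) Hb (e/2)%R) as [N2 H2]. lra.
  exists (N1 + N2)%nat. intros n hn. specialize (H1 n ltac:(lia)). specialize (H2 n ltac:(lia)).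
  replace (u n + v n - (a + b)) with ((u n - a) + (v n - b)) by ring.
  pose proof (Cmod_triangle (u n - a) (v n - b)). lra.
Qed.

Lemma clim_const (c : C) : filterlim (fun _ : nat => c) eventually (locally c).
Proof. apply climE. intros e he. exists O. intros. replace (c - c) with (RtoC 0) by ring. rewrite Cmod_0. lra. Qed.

Lemma clim_ext (u v : nat -> C) (a : C) : (forall n, u n = v n) ->
  filterlim u eventually (locally a) -> filterlim v eventually (locally a).
Proof. intros E H. apply climE. intros e he. destruct (proj1 (climE u a) H e he) as [N HN].
  exists N. intros. rewrite <- E. auto. Qed.

Lemma finite_bound (f : nat -> R) N : exists B, (0 < B)%R /\ forall n, (n <= N)%nat -> (f n <= B)%R.
Proof.
  induction N. exists (Rabs (f O) + 1)%R. split. pose proof (Rabs_pos (f O)). lra.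
  intros n hn. replace n with O by lia. pose proof (Rle_abs (f O)). lra.
  destruct IHN as [B [hB HB]].
  exists (B + Rabs (f (S N)))%R. split. pose proof (Rabs_pos (f (S N))). lra.
  intros n hn. destruct (Nat.eq_dec n (S N)). subst. pose proof (Rle_abs (f (S N))). lra.
  pose proof (Rabs_pos (f (S N))). specialize (HB n ltac:(lia)). lra.
Qed.

Lemma clim_bounded (u : nat -> C) (a : C) : filterlim u eventually (locally a) ->
  exists B, (0 < B)%R /\ forall n, (Cmod (u n) <= B)%R.
Proof.
  intros H. destruct (proj1 (climE u a) H 1%R) as [N HN]. lra.
  assert (exists B, (0 < B)%R /\ forall n, (n <= N)%nat -> (Cmod (u n) <= B)%R) as [B [hB HB]].
  { apply (finite_bound (fun n => Cmod (u n))). }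
  exists (B + Cmod a + 1)%R. split. pose proof (Cmod_ge_0 a). lra.
  intros n. destruct (le_lt_dec n N). specialize (HB n l). pose proof (Cmod_ge_0 a). lra.
  specialize (HN n ltac:(lia)). replace (u n) with ((u n - a) + a) by ring.
  pose proof (Cmod_triangle (u n - a) a). lra.
Qed.

Lemma clim_mult (u v : nat -> C) (a b : C) :
  filterlim u eventually (locally a) -> filterlim v eventually (locally b) ->
  filterlim (fun n => u n * v n) eventually (locally (a * b)).
Proof.
  intros Ha Hb. destruct (clim_bounded u a Ha) as [B [hB HB]].
  apply climE. intros e he.
  set (e1 := (e / (2 * (Cmod b + 1)))%R). set (e2 := (e / (2 * B))%R).
  assert (0 < Cmod b + 1)%R by (pose proof (Cmod_ge_0 b); lra).
  destruct (proj1 (climE u a) Ha e1) as [N1 H1]. unfold e1; apply Rdiv_lt_0_compat; lra.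
  destruct (proj1 (climE v b) Hb e2) as [N2 H2]. unfold e2; apply Rdiv_lt_0_compat; lra.
  exists (N1 + N2)%nat. intros n hn. specialize (H1 n ltac:(lia)). specialize (H2 n ltac:(lia)).
  replace (u n * v n - a * b) with (u n * (v n - b) + (u n - a) * b) by ring.
  pose proof (Cmod_triangle (u n * (v n - b)) ((u n - a) * b)). rewrite !Cmod_mult in H0.
  pose proof (HB n). pose proof (Cmod_ge_0 (u n)). pose proof (Cmod_ge_0 (v n - b)).
  pose proof (Cmod_ge_0 (u n - a)). pose proof (Cmod_ge_0 b).
  assert (Cmod (u n) * Cmod (v n - b) <= B * e2)%R by (apply Rmult_le_compat; lra).
  assert (Cmod (u n - a) * Cmod b <= e1 * (Cmod b + 1))%R by (apply Rmult_le_compat; lra).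
  assert (B * e2 = e / 2)%R by (unfold e2; field; lra).
  assert (e1 * (Cmod b + 1) = e / 2)%R by (unfold e1; field; lra).
  assert (Cmod (u n - a) * Cmod b < e1 * (Cmod b + 1))%R.
  { apply Rle_lt_trans with (e1 * Cmod b)%R. apply Rmult_le_compat_r; lra.
    assert (0 < e1)%R by (unfold e1; apply Rdiv_lt_0_compat; lra). nra. }
  lra.
Qed.

Lemma clim_shift (u : nat -> C) (a : C) : filterlim (fun n => u (S n)) eventually (locally a) ->
  filterlim u eventually (locally a).
Proof. intros H. apply climE. intros e he. destruct (proj1 (climE _ a) H e he) as [N HN].
  exists (S N). intros n hn. destruct n. lia. apply HN. lia. Qed.

Lemma clim_pow (q : C) : (Cmod q < 1)%R -> filterlim (fun n => q ^ n) eventually (locally (RtoC 0)).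
Proof.
  intros h. apply climE. intros e he.
  destruct (pow_lt_1_zero (Cmod q) ltac:(rewrite Rabs_pos_eq; [lra|apply Cmod_ge_0]) e he) as [N HN].
  exists N. intros n hn. replace (q ^ n - 0) with (q ^ n) by ring. rewrite Cmod_pow.
  specialize (HN n hn). rewrite Rabs_pos_eq in HN; auto. apply pow_le, Cmod_ge_0.
Qed.

Fixpoint prodp (a : nat -> C) (n : nat) : C :=
  match n with O => 1 | S m => prodp a m * (1 + a m) end.

Lemma exp_mono (x y : R) : (x <= y)%R -> (exp x <= exp y)%R.
Proof. intros [h|h]. left. apply exp_increasing; auto. subst. lra. Qed.

Lemma prodp_bound (a : nat -> C) (s rho : R) : (0 <= s)%R -> (0 <= rho < 1)%R ->
  (forall i, Cmod (a i) <= s * rho ^ i)%R ->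
  forall n, (Cmod (prodp a n) <= exp (s / (1 - rho)))%R.
Proof.
  intros hs hr ha.
  assert (forall n, Cmod (prodp a n) <= exp (s * (1 - rho ^ n) / (1 - rho)))%R.
  { induction n; simpl.
    - rewrite Cmod_1. replace (s * (1 - 1) / (1 - rho))%R with 0%R by (field; lra). rewrite exp_0. lra.
    - rewrite Cmod_mult.
      assert (Cmod (1 + a n) <= 1 + s * rho ^ n)%R.
      { eapply Rle_trans. apply Cmod_triangle. rewrite Cmod_1. specialize (ha n). lra. }
      replace (s * (1 - rho * rho ^ n) / (1 - rho))%R with (s * (1 - rho ^ n) / (1 - rho) + s * rho ^ n)%R by (field; lra).
      rewrite exp_plus. apply Rmult_le_compat; try apply Cmod_ge_0; auto.
      eapply Rle_trans. exact H. apply exp_ineq1_le. }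
  intros n. eapply Rle_trans. apply H. apply exp_mono.
  assert (0 <= rho ^ n)%R by (apply pow_le; lra).
  apply Rmult_le_compat_r. left. apply Rinv_0_lt_compat. lra. nra.
Qed.

Lemma prodp_sum (a : nat -> C) n :
  prodp a (S n) = 1 + @sum_n C_AbelianMonoid (fun i => prodp a i * a i) n.
Proof.
  induction n.
  - rewrite sum_O. simpl. ring.
  - rewrite sum_Sn. change (prodp a (S (S n))) with (prodp a (S n) * (1 + a (S n))).
    rewrite IHn. change plus with Cplus. cbv beta. simpl prodp. ring.
Qed.

Lemma prodp_conv (a : nat -> C) (s rho : R) : (0 <= s)%R -> (0 <= rho < 1)%R ->
  (forall i, Cmod (a i) <= s * rho ^ i)%R ->
  exists l : C, filterlim (prodp a) eventually (locally l).
Proof.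
  intros hs hr ha. set (E := exp (s / (1 - rho))).
  assert (ex_series (fun i => prodp a i * a i)) as [S HS].
  { apply (ex_series_le (fun i => prodp a i * a i) (fun i => E * s * rho ^ i)%R).
    - intros n. change (Cmod (prodp a n * a n) <= E * s * rho ^ n)%R.
      rewrite Cmod_mult. rewrite Rmult_assoc. apply Rmult_le_compat; try apply Cmod_ge_0; auto.
      apply (prodp_bound a s rho); auto.
    - apply (ex_series_scal (K := R_AbsRing) (E * s)%R (fun n => rho ^ n)%R).
      apply ex_series_geom. rewrite Rabs_pos_eq; lra. }
  exists (1 + S). apply clim_shift.
  apply clim_ext with (fun n => 1 + @sum_n C_AbelianMonoid (fun i => prodp a i * a i) n).
  intros n. symmetry. apply prodp_sum.
  apply clim_plus. apply clim_const. exact HS.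
Qed.

Lemma prodp_conv_nz (a : nat -> C) (s rho : R) : (0 <= s < 1)%R -> (0 <= rho < 1)%R ->
  (forall i, Cmod (a i) <= s * rho ^ i)%R ->
  exists l : C, filterlim (prodp a) eventually (locally l) /\ l <> 0.
Proof.
  intros hs hr ha.
  destruct (prodp_conv a s rho) as [l Hl]; try lra; auto.
  assert (hai : forall i, (Cmod (a i) <= s)%R).
  { intros i. eapply Rle_trans. apply ha. assert (rho ^ i <= 1)%R by (apply pow01; lra). nra. }
  assert (hnz : forall i, 1 + a i <> 0).
  { intros i E. assert (a i = Copp 1) by (replace (a i) with (1 + a i - 1) by ring; rewrite E; ring).
    specialize (hai i). rewrite H, Cmod_opp, Cmod_1 in hai. lra. }
  set (b := fun i => - a i / (1 + a i)).
  assert (hb : forall i, (Cmod (b i) <= (s / (1 - s)) * rho ^ i)%R).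
  { intros i. unfold b. unfold Cdiv. rewrite Cmod_mult, Cmod_opp, Cmod_inv by auto.
    assert (1 - s <= Cmod (1 + a i))%R.
    { pose proof (Cmod_triangle (1 + a i) (- a i)). rewrite Cmod_opp in H.
      replace (1 + a i + - a i) with (RtoC 1) in H by ring. rewrite Cmod_1 in H. specialize (hai i). lra. }
    assert (0 < Cmod (1 + a i))%R by lra.
    apply Rle_trans with (s * rho ^ i * / (1 - s))%R.
    apply Rmult_le_compat. apply Cmod_ge_0. left. apply Rinv_0_lt_compat. lra. apply ha.
    apply Rinv_le_contravar; lra. right. field. lra. }
  destruct (prodp_conv b (s / (1 - s)) rho) as [l' Hl']; auto.
  apply Rmult_le_pos. lra. left. apply Rinv_0_lt_compat. lra.
  exists l. split; auto. intros E.
  assert (forall n, prodp a n * prodp b n = 1).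
  { induction n. simpl. ring.
    change (prodp a (S n) * prodp b (S n)) with (prodp a n * (1 + a n) * (prodp b n * (1 + b n))).
    replace (prodp a n * (1 + a n) * (prodp b n * (1 + b n))) with
      (prodp a n * prodp b n * ((1 + a n) * (1 + b n))) by ring.
    rewrite IHn. unfold b. field. auto. }
  pose proof (clim_mult _ _ _ _ Hl Hl').
  assert (l * l' = 1).
  { apply (clim_unique (fun n => prodp a n * prodp b n)); auto.
    apply clim_ext with (fun _ => RtoC 1). intros; symmetry; auto. apply clim_const. }
  rewrite E in H1. replace (0 * l') with (RtoC 0) in H1 by ring.
  injection H1. lra.
Qed.

Lemma qpoch_prodp (x b : C) n : qpoch x b n = prodp (fun i => - (x * b ^ i)) n.
Proof. induction n. reflexivity. simpl. rewrite IHn. ring. Qed.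

Lemma qpoch_conv (x b : C) : (Cmod x < 1)%R -> (Cmod b < 1)%R ->
  exists l : C, is_qpoch_inf x b l /\ l <> 0.
Proof.
  intros hx hb. destruct (prodp_conv_nz (fun i => - (x * b ^ i)) (Cmod x) (Cmod b)) as [l [Hl Hnz]].
  split; auto; apply Cmod_ge_0. split; auto; apply Cmod_ge_0.
  intros i. rewrite Cmod_opp, Cmod_mult, Cmod_pow. lra.
  exists l. split; auto. unfold is_qpoch_inf.
  apply clim_ext with (prodp (fun i => - (x * b ^ i))); auto. intros; symmetry; apply qpoch_prodp.
Qed.

Lemma rlimE (f : nat -> R) (l : R) : filterlim f eventually (locally l) ->
  forall eps : R, (0 < eps)%R -> exists N, forall n, (N <= n)%nat -> (Rabs (f n - l) < eps)%R.
Proof.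
  intros H eps he. destruct (proj1 (filterlim_locally f l) H (mkposreal eps he)) as [N HN].
  exists N. intros n hn. apply (HN n hn).
Qed.

Lemma clim_sum (u : nat -> nat -> C) (v : nat -> C) K :
  (forall k, filterlim (fun n => u n k) eventually (locally (v k))) ->
  filterlim (fun n => @sum_n C_AbelianMonoid (u n) K) eventually (locally (@sum_n C_AbelianMonoid v K)).
Proof.
  intros H. induction K.
  - rewrite sum_O. apply clim_ext with (fun n => u n O). intros; symmetry; apply sum_O. auto.
  - rewrite sum_Sn. apply clim_ext with (fun n => @sum_n C_AbelianMonoid (u n) K + u n (S K)).
    intros; symmetry; rewrite sum_Sn; reflexivity. apply clim_plus; auto.
Qed.

Lemma tail_bound (f : nat -> C) (g : nat -> R) : (forall k, Cmod (f k) <= g k)%R ->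
  forall K n, (K <= n)%nat ->
  (Cmod (@sum_n C_AbelianMonoid f n - @sum_n C_AbelianMonoid f K) <= @sum_n R_AbelianMonoid g n - @sum_n R_AbelianMonoid g K)%R.
Proof.
  intros hf K n hn. induction n.
  - replace K with O by lia. replace (sum_n f 0 - sum_n f 0) with (RtoC 0) by ring. rewrite Cmod_0. lra.
  - destruct (Nat.eq_dec K (S n)).
    + subst. replace (sum_n f (S n) - sum_n f (S n)) with (RtoC 0) by ring. rewrite Cmod_0. lra.
    + rewrite !sum_Sn. change (@plus C_AbelianMonoid) with Cplus. change (@plus R_AbelianMonoid) with Rplus. cbv beta.
      replace (Cplus (sum_n f n) (f (S n)) - sum_n f K) with ((sum_n f n - sum_n f K) + f (S n)) by ring.
      eapply Rle_trans. apply Cmod_triangle. specialize (IHn ltac:(lia)). specialize (hf (S n)). lra.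
Qed.

Lemma lim_le_bound (w : nat -> C) (l : C) (B : R) : filterlim w eventually (locally l) ->
  (forall n, Cmod (w n) <= B)%R -> (Cmod l <= B)%R.
Proof.
  intros H hb. apply Rnot_lt_le. intro hlt.
  destruct (proj1 (climE w l) H (Cmod l - B)%R) as [N HN]. lra.
  specialize (HN N (le_n N)). specialize (hb N).
  pose proof (Cmod_triangle (w N) (- (w N - l))). rewrite Cmod_opp in H0.
  replace (w N + - (w N - l)) with l in H0 by ring. lra.
Qed.

Lemma tannery (u : nat -> nat -> C) (v : nat -> C) (M : nat -> R) :
  (forall k, filterlim (fun n => u n k) eventually (locally (v k))) ->
  (forall n k, Cmod (u n k) <= M k)%R -> ex_series M ->
  exists L : C, filterlim (@sum_n C_AbelianMonoid v) eventually (locally L) /\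
    filterlim (fun n => @sum_n C_AbelianMonoid (u n) n) eventually (locally L).
Proof.
  intros hlim hM [SM HSM].
  assert (hv : forall k, (Cmod (v k) <= M k)%R).
  { intros k. apply (lim_le_bound (fun n => u n k)); auto. }
  assert (ex_series v) as [L HL].
  { apply (ex_series_le v M). intros n; apply hv. exists SM; exact HSM. }
  exists L. split. exact HL.
  apply climE. intros e he. set (d := (e / 6)%R).
  assert (hd : (0 < d)%R) by (unfold d; lra).
  destruct (rlimE _ _ HSM d hd) as [K HK].
  destruct (proj1 (climE _ L) HL d hd) as [N1 HN1].
  destruct (proj1 (climE _ _) (clim_sum u v K hlim) d hd) as [N2 HN2].
  exists (K + N1 + N2)%nat. intros n hn.
  specialize (HN1 n ltac:(lia)). specialize (HN2 n ltac:(lia)).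
  pose proof (HK n ltac:(lia)) as HKn. pose proof (HK K (le_n K)) as HKK.
  pose proof (tail_bound (u n) M (hM n) K n ltac:(lia)) as T1.
  pose proof (tail_bound v M hv K n ltac:(lia)) as T2.
  set (a1 := sum_n (u n) K - sum_n v K) in *.
  set (a2 := sum_n (u n) n - sum_n (u n) K) in *.
  set (a3 := sum_n v n - sum_n v K) in *.
  set (a4 := sum_n v n - L) in *.
  replace (sum_n (u n) n - L) with (a1 + (a2 + (- a3 + a4))) by (unfold a1, a2, a3, a4; ring).
  eapply Rle_lt_trans. apply Cmod_triangle.
  eapply Rle_lt_trans. apply Rplus_le_compat_l. apply Cmod_triangle.
  eapply Rle_lt_trans. apply Rplus_le_compat_l. apply Rplus_le_compat_l. apply Cmod_triangle.
  rewrite Cmod_opp.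
  apply Rabs_def2 in HKn. apply Rabs_def2 in HKK.
  assert (Cmod a4 < e / 6)%R by exact HN1.
  assert (@sum_n R_AbelianMonoid M n - SM < e / 6 /\ - (e / 6) < @sum_n R_AbelianMonoid M n - SM)%R by exact HKn.
  assert (@sum_n R_AbelianMonoid M K - SM < e / 6 /\ - (e / 6) < @sum_n R_AbelianMonoid M K - SM)%R by exact HKK.
  unfold d in *. lra.
Qed.


Lemma ex_series_gauss (D r : R) : (0 <= D)%R -> (0 <= r < 1)%R ->
  ex_series (fun k => D ^ k * r ^ (k * k))%R.
Proof.
  intros hD hr.
  destruct (pow_lt_1_zero r ltac:(rewrite Rabs_pos_eq; lra) (/ (2 * (D + 1)))%R) as [N HN].
  apply Rinv_0_lt_compat. lra.
  assert (hN : (D * r ^ N <= / 2)%R).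
  { specialize (HN N (le_n N)). rewrite Rabs_pos_eq in HN by (apply pow_le; lra).
    assert (D * r ^ N <= D * / (2 * (D + 1)))%R by (apply Rmult_le_compat_l; lra).
    assert (D * / (2 * (D + 1)) <= / 2)%R.
    { apply Rmult_le_reg_l with (2 * (D + 1))%R. lra. field_simplify; lra. }
    lra. }
  apply (ex_series_incr_n _ N).
  apply (ex_series_le (fun k => D ^ (N + k) * r ^ ((N + k) * (N + k)))%R (fun k => (/ 2) ^ k)%R).
  - intros k. change (Rabs (D ^ (N + k) * r ^ ((N + k) * (N + k))) <= (/ 2) ^ k)%R.
    set (m := (N + k)%nat).
    rewrite pow_mult, <- Rpow_mult_distr.
    assert (0 <= D * r ^ m)%R by (apply Rmult_le_pos; [lra|apply pow_le; lra]).
    rewrite Rabs_pos_eq by (apply pow_le; auto).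
    assert (D * r ^ m <= / 2)%R.
    { unfold m. rewrite pow_add. assert (r ^ k <= 1)%R by (apply pow01; lra).
      assert (0 <= r ^ N)%R by (apply pow_le; lra).
      assert (0 <= D * r ^ N)%R by (apply Rmult_le_pos; lra).
      assert (D * r ^ N * r ^ k <= D * r ^ N)%R by (rewrite <- (Rmult_1_r (D * r ^ N)) at 2; apply Rmult_le_compat_l; lra).
      rewrite <- Rmult_assoc. lra. }
    eapply Rle_trans. apply pow_incr. split. exact H. exact H0.
    unfold m. rewrite pow_add. assert ((/ 2) ^ N <= 1)%R by (apply pow01; lra).
    assert (0 <= (/2) ^ k)%R by (apply pow_le; lra). nra.
  - apply ex_series_geom. rewrite Rabs_pos_eq; lra.
Qed.

Lemma qpoch_bounds (x b : C) (r : R) k : (Cmod x <= r)%R -> (r < 1)%R -> (Cmod b <= 1)%R ->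
  ((1 - r) ^ k <= Cmod (qpoch x b k) <= 2 ^ k)%R.
Proof.
  intros hx hr hb. induction k.
  - simpl. rewrite Cmod_1. lra.
  - simpl qpoch. rewrite Cmod_mult. simpl pow.
    assert (Cmod (x * b ^ k) <= r)%R.
    { rewrite Cmod_mult, Cmod_pow. assert (0 <= Cmod b ^ k <= 1)%R by (apply pow01; split; [apply Cmod_ge_0|lra]).
      pose proof (Cmod_ge_0 x). nra. }
    assert (1 - r <= Cmod (1 - x * b ^ k) <= 2)%R.
    { split.
      - pose proof (Cmod_triangle (1 - x * b ^ k) (x * b ^ k)).
        replace (1 - x * b ^ k + x * b ^ k) with (RtoC 1) in H0 by ring. rewrite Cmod_1 in H0. lra.
      - unfold Cminus. eapply Rle_trans. apply Cmod_triangle. rewrite Cmod_1, Cmod_opp.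
        pose proof (Cmod_ge_0 x). lra. }
    assert (0 <= (1 - r) ^ k)%R.
    { apply pow_le. pose proof (Cmod_ge_0 x). lra. }
    split.
    + replace ((1 - r) * (1 - r) ^ k)%R with ((1 - r) ^ k * (1 - r))%R by ring.
      apply Rmult_le_compat; lra.
    + replace (2 * 2 ^ k)%R with (2 ^ k * 2)%R by ring.
      apply Rmult_le_compat; try lra; apply Cmod_ge_0.
Qed.

Lemma qint_upper (q : C) m : (Cmod q < 1)%R -> (Cmod (qint q m) <= 2 * / (1 - Cmod q))%R.
Proof.
  intros h. unfold qint. assert (1 - q <> 0) by (apply nz1; auto).
  rewrite Cmod_div by auto.
  assert (1 - Cmod q <= Cmod (1 - q))%R.
  { pose proof (Cmod_triangle (1 - q) q). replace (1 - q + q) with (RtoC 1) in H0 by ring. rewrite Cmod_1 in H0. lra. }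
  assert (Cmod (1 - q ^ m) <= 2)%R.
  { unfold Cminus. eapply Rle_trans. apply Cmod_triangle. rewrite Cmod_1, Cmod_opp, Cmod_pow.
    assert (Cmod q ^ m <= 1)%R by (apply pow01; split; [apply Cmod_ge_0|lra]). lra. }
  pose proof (Cmod_ge_0 q). unfold Rdiv. apply Rmult_le_compat; try lra. apply Cmod_ge_0.
  left; apply Rinv_0_lt_compat. lra. apply Rinv_le_contravar; lra.
Qed.

Lemma qint_lower (q : C) m : (0 < Cmod q)%R -> (Cmod q < 1)%R -> (0 < m)%nat ->
  ((1 - Cmod q) / 2 <= Cmod (qint q m))%R.
Proof.
  intros h0 h hm. unfold qint. assert (1 - q <> 0) by (apply nz1; auto).
  rewrite Cmod_div by auto.
  assert (Cmod (1 - q) <= 2)%R.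
  { unfold Cminus. eapply Rle_trans. apply Cmod_triangle. rewrite Cmod_1, Cmod_opp. lra. }
  assert (0 < Cmod (1 - q))%R.
  { destruct (Rle_lt_dec (Cmod (1 - q)) 0); auto. pose proof (Cmod_ge_0 (1 - q)).
    assert (Cmod (1 - q) = 0)%R by lra. apply Cmod_eq_0 in H2. contradiction. }
  assert (1 - Cmod q <= Cmod (1 - q ^ m))%R.
  { pose proof (Cmod_triangle (1 - q ^ m) (q ^ m)). replace (1 - q ^ m + q ^ m) with (RtoC 1) in H2 by ring.
    rewrite Cmod_1, Cmod_pow in H2.
    assert (Cmod q ^ m <= Cmod q)%R.
    { destruct m. lia. change (Cmod q ^ S m)%R with (Cmod q * Cmod q ^ m)%R. assert (Cmod q ^ m <= 1)%R by (apply pow01; lra). nra. }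
    lra. }
  unfold Rdiv. apply Rmult_le_compat; try lra. apply Rinv_le_contravar; lra.
Qed.

Lemma sum_bound (f : nat -> C) (B : R) m : (forall i, Cmod (f i) <= B)%R ->
  (Cmod (@sum_n C_AbelianMonoid f m) <= INR (S m) * B)%R.
Proof.
  intros h. induction m.
  - rewrite sum_O. simpl. specialize (h O). lra.
  - rewrite sum_Sn. change (@plus C_AbelianMonoid) with Cplus. eapply Rle_trans. apply Cmod_triangle.
    rewrite (S_INR (S m)). specialize (h (S m)). lra.
Qed.

Lemma three_pow k : (INR (S (2 * k)) <= 3 ^ k)%R.
Proof.
  induction k. simpl. lra.
  replace (S (2 * S k)) with (S (S (S (2 * k)))) by lia. rewrite !S_INR. rewrite S_INR in IHk.
  simpl pow. pose proof (pos_INR (2 * k)). lra.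
Qed.

Lemma inner_sum_bound (q : C) k : (0 < Cmod q)%R -> (Cmod q < 1)%R ->
  (Cmod (inner_sum q k) <= 3 ^ k * (4 * (/ (1 - Cmod q)) ^ 2))%R.
Proof.
  intros h0 h1. unfold inner_sum.
  eapply Rle_trans. apply (sum_bound _ (4 * (/ (1 - Cmod q)) ^ 2)%R).
  { intros i. destruct i.
    - rewrite Cmod_0. assert (0 < / (1 - Cmod q))%R by (apply Rinv_0_lt_compat; lra).
      assert (0 <= (/ (1 - Cmod q)) ^ 2)%R by (apply pow_le; lra). lra.
    - pose proof (qint_lower q (S i) h0 h1 ltac:(lia)) as hl.
      assert (qint q (S i) <> 0).
      { intro E. rewrite E, Cmod_0 in hl. lra. }
      rewrite Cmod_div by (apply Cpow_nz; auto).
      rewrite Cmod_mult, !Cmod_pow.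
      assert (Hm1 : Cmod (-1) = 1%R) by (replace (-1 : C) with (Copp 1) by ring; rewrite Cmod_opp; apply Cmod_1).
      rewrite Hm1, pow1.
      assert (Cmod q ^ S i <= 1)%R by (apply pow01; lra).
      assert (0 < Cmod (qint q (S i)))%R by lra.
      unfold Rdiv. rewrite Rmult_1_l.
      assert (/ Cmod (qint q (S i)) ^ 2 <= 4 * (/ (1 - Cmod q)) ^ 2)%R.
      { rewrite Rinv_pow by lra.
        replace (4 * (/ (1 - Cmod q)) ^ 2)%R with ((2 * / (1 - Cmod q)) ^ 2)%R by (simpl; ring).
        apply pow_incr. split. left. apply Rinv_0_lt_compat. lra.
        replace (2 * / (1 - Cmod q))%R with (/ ((1 - Cmod q) / 2))%R by (field; lra).
        apply Rinv_le_contravar; lra. }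
      assert (0 <= / Cmod (qint q (S i)) ^ 2)%R by (left; apply Rinv_0_lt_compat; apply pow_lt; lra).
      assert (0 <= Cmod q ^ S i)%R by (apply pow_le, Cmod_ge_0). nra. }
  apply Rmult_le_compat_r. assert (0 < / (1 - Cmod q))%R by (apply Rinv_0_lt_compat; lra).
  assert (0 <= (/ (1 - Cmod q)) ^ 2)%R by (apply pow_le; lra). lra.
  apply three_pow.
Qed.

Lemma pif_bound (q : C) n k : (0 < Cmod q)%R -> (Cmod q < 1)%R ->
  (Cmod (pif q n k) * Cmod q ^ k <= 2 ^ k * Cmod q ^ (k * k))%R.
Proof.
  intros h0 h1. set (r := Cmod q). induction k.
  - simpl. rewrite Cmod_1. lra.
  - destruct (le_lt_dec (S k) n) as [hk|hk].
    + cbn [pif]. rewrite Cmod_mult.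
      assert (Cmod (q ^ (2 * n) - q ^ (2 * k)) <= 2 * r ^ (2 * k))%R.
      { unfold Cminus. eapply Rle_trans. apply Cmod_triangle. rewrite Cmod_opp, !Cmod_pow. fold r.
        assert (r ^ (2 * n) <= r ^ (2 * k))%R.
        { replace (2 * n)%nat with (2 * k + 2 * (n - k))%nat by lia. rewrite pow_add.
          assert (r ^ (2 * (n - k)) <= 1)%R by (apply pow01; unfold r; lra).
          assert (0 <= r ^ (2 * k))%R by (apply pow_le; unfold r; lra). nra. }
        lra. }
      assert (0 <= r ^ k)%R by (apply pow_le; unfold r; lra).
      assert (0 <= r ^ (2 * k))%R by (apply pow_le; unfold r; lra).
      pose proof (Cmod_ge_0 (pif q n k)). pose proof (Cmod_ge_0 (q ^ (2 * n) - q ^ (2 * k))).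
      assert (0 <= r)%R by (unfold r; lra).
      replace (2 ^ S k * r ^ (S k * S k))%R with ((2 ^ k * r ^ (k * k)) * (2 * r ^ (2 * k) * r))%R
        by (replace (S k * S k)%nat with (k * k + 2 * k + 1)%nat by lia; rewrite !pow_add; simpl; ring).
      replace (Cmod (pif q n k) * Cmod (q ^ (2 * n) - q ^ (2 * k)) * r ^ S k)%R with
        ((Cmod (pif q n k) * r ^ k) * (Cmod (q ^ (2 * n) - q ^ (2 * k)) * r))%R by (simpl; ring).
      apply Rmult_le_compat; try nra.
    + rewrite pif_zero by lia. rewrite Cmod_0, Rmult_0_l.
      apply Rmult_le_pos. apply pow_le; lra. apply pow_le; unfold r; lra.
Qed.

Lemma pow_swap (x : R) a b : ((x ^ a) ^ b = (x ^ b) ^ a)%R.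
Proof. rewrite <- !pow_mult, Nat.mul_comm. reflexivity. Qed.

Lemma u_bound (q : C) n k : (0 < Cmod q)%R -> (Cmod q < 1)%R ->
  let t := (/ (1 - Cmod q))%R in
  (Cmod (ak q k * pif q n k / dd q n k * inner_sum q k) <=
   8 * t ^ 3 * (48 * t ^ 4) ^ k * Cmod q ^ (k * k))%R.
Proof.
  intros h0 h1 t. set (r := Cmod q) in *.
  assert (ht : (0 < t)%R) by (apply Rinv_0_lt_compat; lra).
  assert (hq2 : (Cmod (q ^ 2) <= r)%R).
  { rewrite Cmod_pow. fold r. change (r ^ 2)%R with (r * (r * 1))%R. assert (0 <= r)%R by lra. assert (r < 1)%R by lra. nra. }
  assert (hq2' : (Cmod (q ^ 2) <= 1)%R) by lra.
  destruct (qpoch_bounds q (q ^ 2) r k (Rle_refl r) h1 hq2') as [P1l P1u].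
  destruct (qpoch_bounds (q ^ 2) (q ^ 2) r k hq2 h1 hq2') as [P2l P2u].
  assert (hd : (Cmod (q ^ (2 * n + 3)) <= r)%R).
  { rewrite Cmod_pow. fold r. replace (2 * n + 3)%nat with (S (2 * n + 2)) by lia. change (r ^ S (2 * n + 2))%R with (r * r ^ (2 * n + 2))%R.
    assert (r ^ (2 * n + 2) <= 1)%R by (apply pow01; lra). assert (0 <= r)%R by lra. nra. }
  destruct (qpoch_bounds (q ^ (2 * n + 3)) (q ^ 2) r k hd h1 hq2') as [Dl Du].
  pose proof (qint_upper q (4 * k + 1) h1) as QU.
  pose proof (inner_sum_bound q k h0 h1) as HU.
  pose proof (pif_bound q n k h0 h1) as PB.
  assert (hrk : (0 < (1 - r) ^ k)%R) by (apply pow_lt; lra).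
  assert (qpoch (q ^ 2) (q ^ 2) k <> 0). { intro E. rewrite E, Cmod_0 in P2l. lra. }
  assert (dd q n k <> 0). { unfold dd. intro E. rewrite E, Cmod_0 in Dl. lra. }
  unfold ak. unfold Cdiv. rewrite !Cmod_mult. rewrite !Cmod_inv by (try apply Cpow_nz; auto).
  rewrite !Cmod_pow. fold r. fold t in QU, HU.
  set (a1 := Cmod (qint q (4 * k + 1))) in *.
  set (a2 := Cmod (qpoch q (q ^ 2) k)) in *.
  set (a3 := Cmod (qpoch (q ^ 2) (q ^ 2) k)) in *.
  set (a4 := Cmod (pif q n k)) in *.
  set (a5 := Cmod (dd q n k)) in *. unfold dd in a5. fold a5 in Dl.
  set (a6 := Cmod (inner_sum q k)) in *.
  assert (0 <= a1)%R by apply Cmod_ge_0. assert (0 <= a2)%R by apply Cmod_ge_0.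
  assert (0 <= a4)%R by apply Cmod_ge_0. assert (0 <= a6)%R by apply Cmod_ge_0.
  assert (0 <= r)%R by lra.
  assert (I3 : (/ a3 ^ 3 <= (t ^ k) ^ 3)%R).
  { rewrite Rinv_pow by lra. apply pow_incr. split. left; apply Rinv_0_lt_compat; lra.
    unfold t. rewrite <- Rinv_pow by lra. apply Rinv_le_contravar; lra. }
  assert (I5 : (/ a5 <= t ^ k)%R).
  { unfold t. rewrite <- Rinv_pow by lra. apply Rinv_le_contravar; lra. }
  assert (0 <= / a3 ^ 3)%R by (left; apply Rinv_0_lt_compat; apply pow_lt; lra).
  assert (0 <= / a5)%R by (left; apply Rinv_0_lt_compat; lra).
  assert (A2 : (a2 ^ 3 <= (2 ^ k) ^ 3)%R) by (apply pow_incr; lra).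
  assert (0 <= a2 ^ 3)%R by (apply pow_le; lra).
  assert (0 <= r ^ k)%R by (apply pow_le; lra).
  unfold Rdiv.
  replace (a1 * (a2 ^ 3 * / a3 ^ 3) * r ^ k * a4 * / a5 * a6)%R with
    (a1 * a2 ^ 3 * / a3 ^ 3 * (a4 * r ^ k) * / a5 * a6)%R by ring.
  change (Cmod q) with r in QU, HU, PB. fold t in QU, HU.
  assert (0 <= a4 * r ^ k)%R by (apply Rmult_le_pos; lra).
  assert (S1 : (a1 * a2 ^ 3 <= 2 * t * (2 ^ k) ^ 3)%R) by (apply Rmult_le_compat; lra).
  assert (S2 : (a1 * a2 ^ 3 * / a3 ^ 3 <= 2 * t * (2 ^ k) ^ 3 * (t ^ k) ^ 3)%R)
    by (apply Rmult_le_compat; try lra; apply Rmult_le_pos; lra).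
  assert (0 <= a1 * a2 ^ 3 * / a3 ^ 3)%R by (repeat apply Rmult_le_pos; lra).
  assert (S3 : (a1 * a2 ^ 3 * / a3 ^ 3 * (a4 * r ^ k) <= 2 * t * (2 ^ k) ^ 3 * (t ^ k) ^ 3 * (2 ^ k * r ^ (k * k)))%R)
    by (apply Rmult_le_compat; lra).
  assert (0 <= a1 * a2 ^ 3 * / a3 ^ 3 * (a4 * r ^ k))%R by (apply Rmult_le_pos; lra).
  assert (S4 : (a1 * a2 ^ 3 * / a3 ^ 3 * (a4 * r ^ k) * / a5 <= 2 * t * (2 ^ k) ^ 3 * (t ^ k) ^ 3 * (2 ^ k * r ^ (k * k)) * t ^ k)%R)
    by (apply Rmult_le_compat; lra).
  assert (0 <= a1 * a2 ^ 3 * / a3 ^ 3 * (a4 * r ^ k) * / a5)%R by (apply Rmult_le_pos; lra).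
  assert (S5 : (a1 * a2 ^ 3 * / a3 ^ 3 * (a4 * r ^ k) * / a5 * a6 <= 2 * t * (2 ^ k) ^ 3 * (t ^ k) ^ 3 * (2 ^ k * r ^ (k * k)) * t ^ k * (3 ^ k * (4 * t ^ 2)))%R)
    by (apply Rmult_le_compat; lra).
  eapply Rle_trans. exact S5. right.
rewrite (Rpow_mult_distr 48 (t ^ 4) k), (pow_swap t 4 k).
    replace 48%R with (2 ^ 3 * 2 * 3)%R by ring.
    rewrite !Rpow_mult_distr, (pow_swap 2 3 k). ring.
Qed.


Lemma clim_inv (u : nat -> C) (a : C) : filterlim u eventually (locally a) -> a <> 0 ->
  (forall n, u n <> 0) -> filterlim (fun n => / u n) eventually (locally (/ a)).
Proof.
  intros H ha hu. assert (hm : (0 < Cmod a)%R).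
  { destruct (Rle_lt_dec (Cmod a) 0); auto. pose proof (Cmod_ge_0 a).
    assert (Cmod a = 0)%R by lra. apply Cmod_eq_0 in H1. contradiction. }
  apply climE. intros e he.
  destruct (proj1 (climE u a) H (Cmod a / 2)%R) as [N1 H1]. lra.
  destruct (proj1 (climE u a) H (e * Cmod a * Cmod a / 2)%R) as [N2 H2].
  { apply Rmult_lt_0_compat; [|lra]. apply Rmult_lt_0_compat; [|lra]. apply Rmult_lt_0_compat; lra. }
  exists (N1 + N2)%nat. intros n hn. specialize (H1 n ltac:(lia)). specialize (H2 n ltac:(lia)).
  assert (hun : (Cmod a / 2 <= Cmod (u n))%R).
  { pose proof (Cmod_triangle (u n) (- (u n - a))). rewrite Cmod_opp in H0.
    replace (u n + - (u n - a)) with a in H0 by ring. lra. }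
  replace (/ u n - / a) with ((a - u n) * / u n * / a) by (field; auto).
  rewrite !Cmod_mult, !Cmod_inv by auto.
  replace (a - u n) with (- (u n - a)) by ring. rewrite Cmod_opp.
  assert (/ Cmod (u n) <= 2 / Cmod a)%R.
  { replace (2 / Cmod a)%R with (/ (Cmod a / 2))%R by (field; lra). apply Rinv_le_contravar; lra. }
  assert (0 < / Cmod a)%R by (apply Rinv_0_lt_compat; lra).
  assert (0 <= / Cmod (u n))%R by (left; apply Rinv_0_lt_compat; lra).
  pose proof (Cmod_ge_0 (u n - a)).
  apply Rle_lt_trans with (Cmod (u n - a) * (2 / Cmod a) * / Cmod a)%R.
  apply Rmult_le_compat_r. lra. apply Rmult_le_compat_l; lra.
  apply Rlt_le_trans with ((e * Cmod a * Cmod a / 2) * (2 / Cmod a) * / Cmod a)%R.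
  apply Rmult_lt_compat_r. lra. apply Rmult_lt_compat_r. apply Rdiv_lt_0_compat; lra. lra.
  right. field. lra.
Qed.

Lemma clim_eq (u : nat -> C) (a b : C) : filterlim u eventually (locally a) -> a = b ->
  filterlim u eventually (locally b).
Proof. intros H E. subst. exact H. Qed.

Lemma clim_sub (u v : nat -> C) (a b : C) :
  filterlim u eventually (locally a) -> filterlim v eventually (locally b) ->
  filterlim (fun n => u n - v n) eventually (locally (a - b)).
Proof.
  intros Ha Hb. apply clim_ext with (fun n => u n + (-1) * v n). intros; ring.
  replace (a - b) with (a + (-1) * b) by ring. apply clim_plus; auto.
  apply clim_mult; auto. apply clim_const.
Qed.

Lemma clim_q2n (q : C) (c : C) : (Cmod q < 1)%R -> filterlim (fun n => c * q ^ (2 * n)) eventually (locally (RtoC 0)).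
Proof.
  intros h. replace (RtoC 0) with (c * 0) by ring. apply clim_mult. apply clim_const.
  apply clim_ext with (fun n => (q ^ 2) ^ n). intros n. apply powq2.
  apply clim_pow. rewrite Cmod_pow. apply pow_lt_1_compat. split. apply Cmod_ge_0. auto. lia.
Qed.

Fixpoint pl (q : C) (k : nat) : C := match k with O => 1 | S k' => pl q k' * (0 - q ^ (2 * k')) end.

Lemma pif_lim (q : C) k : (Cmod q < 1)%R -> filterlim (fun n => pif q n k) eventually (locally (pl q k)).
Proof.
  intros h. induction k.
  - apply clim_const.
  - cbn [pif pl]. apply clim_mult; auto. apply clim_sub. 
    apply clim_ext with (fun n => 1 * q ^ (2 * n)). intros; ring. apply clim_q2n; auto.
    apply clim_const.
Qed.

Lemma dd_lim (q : C) k : (Cmod q < 1)%R -> filterlim (fun n => dd q n k) eventually (locally (RtoC 1)).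
Proof.
  intros h. unfold dd. induction k.
  - apply clim_const.
  - apply clim_ext with (fun n => qpoch (q ^ (2 * n + 3)) (q ^ 2) k * (1 - (q ^ 3 * (q ^ 2) ^ k) * q ^ (2 * n))).
    { intros n. rewrite qpoch_S. f_equal. f_equal. rewrite Cpow_add_r. ring. }
    eapply clim_eq; [|instantiate (1 := 1 * (1 - 0)); ring]. apply clim_mult; auto. apply clim_sub. apply clim_const.
    apply clim_q2n; auto.
Qed.

Lemma pl_eq (q : C) k : q ^ k * pl q k = (-1) ^ k * q ^ (k * k).
Proof.
  induction k.
  - simpl. ring.
  - cbn [pl]. replace (S k * S k)%nat with (k * k + (2 * k + 1))%nat by lia.
    rewrite Cpow_add_r, Cpow_add_r. rewrite !Cpow_S.
    replace (q * q ^ k * (pl q k * (0 - q ^ (2 * k)))) with (- (q ^ k * pl q k) * q ^ (2 * k) * q) by ring.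
    rewrite IHk. ring.
Qed.

Lemma u_lim (q : C) k : (0 < Cmod q)%R -> (Cmod q < 1)%R ->
  filterlim (fun n => ak q k * pif q n k / dd q n k * inner_sum q k) eventually (locally (lhs_term q k)).
Proof.
  intros h0 h1.
  assert (L : filterlim (fun n => ak q k * pif q n k / dd q n k * inner_sum q k) eventually
     (locally (ak q k * pl q k / 1 * inner_sum q k))).
  { apply clim_mult; [|apply clim_const]. unfold Cdiv. apply clim_mult.
    apply clim_mult. apply clim_const. apply pif_lim; auto.
    apply clim_inv. apply dd_lim; auto. intro E. injection E. lra.
    intros n. apply dd_nz; auto. }
  replace (lhs_term q k) with (ak q k * pl q k / 1 * inner_sum q k); auto.
  destruct k.
  - simpl. rewrite inner_sum_0. unfold Cdiv. ring.
  - unfold lhs_term, ak. rewrite <- pl_eq. unfold Cdiv.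
    replace (/ (RtoC 1)) with (RtoC 1) by (field). ring.
Qed.


Lemma sum_scal (c : C) (f : nat -> C) m : @sum_n C_AbelianMonoid (fun k => c * f k) m =
  c * @sum_n C_AbelianMonoid f m.
Proof.
  induction m. rewrite !sum_O. reflexivity.
  rewrite !sum_Sn, IHm. toC. ring.
Qed.

Lemma finite_identity (q : C) n : (0 < Cmod q)%R -> (Cmod q < 1)%R ->
  @sum_n C_AbelianMonoid (fun k => ak q k * pif q n k / dd q n k * inner_sum q k) n = PP q n * gg q n.
Proof.
  intros h0 h1. destruct (FF_sum q n h0 h1) as [S1 S2].
  assert (hP := PP_nz q n h0 h1).
  assert (E : forall k, ak q k * pif q n k / dd q n k * inner_sum q k =
     PP q n * (FF q n k * (inner_sum q k - gg q n)) + (PP q n * gg q n) * FF q n k).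
  { intros k. unfold FF. field. split; auto. apply dd_nz; auto. }
  rewrite (sum_n_ext _ _ _ E), sum_add, !sum_scal, S1, S2. toC. ring.
Qed.

Theorem theorem1p4 (q : C) (hq0 : (0 < Cmod q)%R) (hq1 : (Cmod q < 1)%R) :
  exists (L P1 P3 P2 T : C),
    is_series (lhs_term q) L /\
    is_qpoch_inf q (q ^ 2) P1 /\
    is_qpoch_inf (q ^ 3) (q ^ 2) P3 /\
    is_qpoch_inf (q ^ 2) (q ^ 2) P2 /\
    is_series (rhs_term q) T /\
    L = P1 * P3 / (P2 ^ 2) * T.
Proof.
  assert (h2 : (Cmod (q ^ 2) < 1)%R) by (rewrite Cmod_pow; apply pow_lt_1_compat; [split; [apply Cmod_ge_0|auto]|lia]).
  assert (h3 : (Cmod (q ^ 3) < 1)%R) by (rewrite Cmod_pow; apply pow_lt_1_compat; [split; [apply Cmod_ge_0|auto]|lia]).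
  destruct (qpoch_conv q (q ^ 2) hq1 h2) as [P1 [HP1 nz1']].
  destruct (qpoch_conv (q ^ 3) (q ^ 2) h3 h2) as [P3 [HP3 nz3]].
  destruct (qpoch_conv (q ^ 2) (q ^ 2) h2 h2) as [P2 [HP2 nz2]].
  set (t := (/ (1 - Cmod q))%R).
  assert (ht : (0 < t)%R) by (apply Rinv_0_lt_compat; lra).
  destruct (tannery (fun n k => ak q k * pif q n k / dd q n k * inner_sum q k) (lhs_term q)
     (fun k => 8 * t ^ 3 * (48 * t ^ 4) ^ k * Cmod q ^ (k * k))%R) as [L [HL HS]].
  - intros k. apply u_lim; auto.
  - intros n k. apply u_bound; auto.
  - apply ex_series_ext with (fun k => scal (8 * t ^ 3) ((48 * t ^ 4) ^ k * Cmod q ^ (k * k)))%R.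
    { intros k. unfold scal; simpl. unfold mult; simpl. ring. }
    apply (ex_series_scal (K := R_AbsRing) (8 * t ^ 3)%R (fun k => (48 * t ^ 4) ^ k * Cmod q ^ (k * k))%R). apply ex_series_gauss.
    assert (0 <= t ^ 4)%R by (apply pow_le; lra). lra.
    split. apply Cmod_ge_0. auto.
  - set (Pl := P1 * P3 / P2 ^ 2).
    assert (hPl : Pl <> 0).
    { unfold Pl. apply Cdiv_nz. apply Cmult_neq_0; auto. apply Cpow_nz; auto. }
    assert (HPP : filterlim (PP q) eventually (locally Pl)).
    { unfold PP, Pl. unfold Cdiv. apply clim_mult. apply clim_mult; auto.
      apply clim_inv. unfold Cpow. apply clim_mult; auto. apply clim_mult; auto. apply clim_const.
      apply Cpow_nz; auto. intros n. apply Cpow_nz. apply qpoch_nz; auto. left; auto. }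
    assert (HT : filterlim (gg q) eventually (locally (L / Pl))).
    { apply clim_ext with (fun n => @sum_n C_AbelianMonoid (fun k => ak q k * pif q n k / dd q n k * inner_sum q k) n * / PP q n).
      { intros n. rewrite finite_identity by auto. field. apply PP_nz; auto. }
      unfold Cdiv. apply clim_mult; auto. apply clim_inv; auto. intros n; apply PP_nz; auto. }
    exists L, P1, P3, P2, (L / Pl). repeat split; auto.
    fold Pl. field. auto.
Qed.
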